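(* Let $\mathfrak{T}$ be a pre-Tannakian category over a field $k$ and let $A$ be a simple commutative algebra in $\mathfrak{T}$. Then $\Gamma(A)=\mathrm{Hom}(\mathbf{1},A)$ is a finite extension field of $k$.
   Context: Pre-Tannakian: abelian $k$-linear symmetric monoidal category (bilinear tensor product) with all objects of finite length, finite-dimensional Hom spaces, all objects rigid, $\mathrm{End}(\mathbf{1})=k$. An algebra is a commutative, unital, associative algebra object; an ideal of $A$ is an $A$-submodule of $A$; $A$ is simple if it is nonzero and its only ideals are $0$ and $A$. $\Gamma(A)$ is a finite-dimensional commutative $k$-algebra. *)

(* Defs.v *)
From HB Require Import structures.
From mathcomp Require Import all_boot all_algebra.

Set Implicit Arguments.
Unset Strict Implicit.
Unset Printing Implicit Defensive.

Import GRing.Theory.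
Local Open Scope ring_scope.

(* Mor X Y is a vectType k, i.e. a finite-dimensional k-vector space.   *)
Record kcat (k : fieldType) := KCat {
  Obj : Type;
  Mor : Obj -> Obj -> vectType k;
  idm : forall X, Mor X X;
  cmp : forall X Y Z, Mor Y Z -> Mor X Y -> Mor X Z;
  compA : forall X Y Z W (f : Mor X Y) (g : Mor Y Z) (h : Mor Z W),
      cmp h (cmp g f) = cmp (cmp h g) f;
  comp1m : forall X Y (f : Mor X Y), cmp (idm Y) f = f;
  compm1 : forall X Y (f : Mor X Y), cmp f (idm X) = f;
  comp_linl : forall X Y Z (a : k) (g g' : Mor Y Z) (f : Mor X Y),
      cmp (a *: g + g') f = a *: cmp g f + cmp g' f;
  comp_linr : forall X Y Z (a : k) (g : Mor Y Z) (f f' : Mor X Y),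
      cmp g (a *: f + f') = a *: cmp g f + cmp g f'
}.

Arguments Obj {_} _.
Arguments Mor {_ _} _ _.
Arguments idm {_ _} _.
Arguments cmp {_ _ _ _ _} _ _.

Section CatDefs.
Variables (k : fieldType) (C : kcat k).

Definition is_zero_obj (Z : Obj C) : Prop := idm Z = 0.

Definition is_iso (X Y : Obj C) (f : Mor X Y) : Prop :=
  exists g : Mor Y X, cmp g f = idm X /\ cmp f g = idm Y.

Definition mono (X Y : Obj C) (f : Mor X Y) : Prop :=
  forall W (g h : Mor W X), cmp f g = cmp f h -> g = h.

Definition epi (X Y : Obj C) (f : Mor X Y) : Prop :=
  forall W (g h : Mor Y W), cmp g f = cmp h f -> g = h.

Definition is_kernel (X Y K : Obj C) (f : Mor X Y) (i : Mor K X) : Prop :=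
  cmp f i = 0 /\
  forall W (g : Mor W X), cmp f g = 0 -> exists! h : Mor W K, cmp i h = g.

Definition is_cokernel (X Y Q : Obj C) (f : Mor X Y) (p : Mor Y Q) : Prop :=
  cmp p f = 0 /\
  forall W (g : Mor Y W), cmp g f = 0 -> exists! h : Mor Q W, cmp h p = g.

Definition is_biproduct (X Y P : Obj C) (i1 : Mor X P) (i2 : Mor Y P)
  (p1 : Mor P X) (p2 : Mor P Y) : Prop :=
  [/\ cmp p1 i1 = idm X, cmp p2 i2 = idm Y, cmp p1 i2 = 0, cmp p2 i1 = 0
    & cmp i1 p1 + cmp i2 p2 = idm P].

(* abelian (the category is already k-linear, hence preadditive) *)
Definition abelian : Prop :=
  [/\ (exists Z : Obj C, is_zero_obj Z),
      (forall X Y : Obj C, exists P (i1 : Mor X P) (i2 : Mor Y P)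
         (p1 : Mor P X) (p2 : Mor P Y), is_biproduct i1 i2 p1 p2),
      (forall (X Y : Obj C) (f : Mor X Y),
         (exists K (i : Mor K X), is_kernel f i) /\
         (exists Q (p : Mor Y Q), is_cokernel f p)),
      (forall (X Y : Obj C) (f : Mor X Y), mono f ->
          exists Z (g : Mor Y Z), is_kernel g f)
    & (forall (X Y : Obj C) (f : Mor X Y), epi f ->
          exists Z (g : Mor Z X), is_cokernel g f)].

(* subobjects of X: monos into X, ordered by factorization *)
Definition sub_le (X : Obj C) (s t : {S : Obj C & Mor S X}) : Prop :=
  exists h : Mor (projT1 s) (projT1 t), cmp (projT2 t) h = projT2 s.

Definition sub_lt (X : Obj C) (s t : {S : Obj C & Mor S X}) : Prop :=
  sub_le s t /\ ~ sub_le t s.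

Definition finite_length_obj (X : Obj C) : Prop :=
  exists n : nat, forall c : nat -> {S : Obj C & Mor S X},
    (forall i, mono (projT2 (c i))) ->
    exists i, (i < n)%N /\ ~ sub_lt (c i) (c i.+1).

Definition finite_length : Prop := forall X : Obj C, finite_length_obj X.

End CatDefs.

Record smc (k : fieldType) (C : kcat k) := SMC {
  tens : Obj C -> Obj C -> Obj C;
  tensm : forall X X' Y Y', Mor X X' -> Mor Y Y' -> Mor (tens X Y) (tens X' Y');
  unitob : Obj C;
  alpha : forall X Y Z, Mor (tens (tens X Y) Z) (tens X (tens Y Z));
  alphai : forall X Y Z, Mor (tens X (tens Y Z)) (tens (tens X Y) Z);
  lam : forall X, Mor (tens unitob X) X;
  lami : forall X, Mor X (tens unitob X);
  rho : forall X, Mor (tens X unitob) X;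
  rhoi : forall X, Mor X (tens X unitob);
  beta : forall X Y, Mor (tens X Y) (tens Y X);
  tensm_id : forall X Y, tensm (idm X) (idm Y) = idm (tens X Y);
  tensm_comp : forall X X' X'' Y Y' Y'' (f : Mor X X') (g : Mor X' X'')
      (f' : Mor Y Y') (g' : Mor Y' Y''),
      tensm (cmp g f) (cmp g' f') = cmp (tensm g g') (tensm f f');
  tensm_linl : forall X X' Y Y' (a : k) (f f' : Mor X X') (g : Mor Y Y'),
      tensm (a *: f + f') g = a *: tensm f g + tensm f' g;
  tensm_linr : forall X X' Y Y' (a : k) (f : Mor X X') (g g' : Mor Y Y'),
      tensm f (a *: g + g') = a *: tensm f g + tensm f g';
  alphaK : forall X Y Z, cmp (alphai X Y Z) (alpha X Y Z) = idm _;
  alphaKV : forall X Y Z, cmp (alpha X Y Z) (alphai X Y Z) = idm _;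
  lamK : forall X, cmp (lami X) (lam X) = idm _;
  lamKV : forall X, cmp (lam X) (lami X) = idm _;
  rhoK : forall X, cmp (rhoi X) (rho X) = idm _;
  rhoKV : forall X, cmp (rho X) (rhoi X) = idm _;
  alpha_nat : forall X X' Y Y' Z Z' (f : Mor X X') (g : Mor Y Y') (h : Mor Z Z'),
      cmp (alpha X' Y' Z') (tensm (tensm f g) h)
      = cmp (tensm f (tensm g h)) (alpha X Y Z);
  lam_nat : forall X X' (f : Mor X X'),
      cmp (lam X') (tensm (idm unitob) f) = cmp f (lam X);
  rho_nat : forall X X' (f : Mor X X'),
      cmp (rho X') (tensm f (idm unitob)) = cmp f (rho X);
  beta_nat : forall X X' Y Y' (f : Mor X X') (g : Mor Y Y'),
      cmp (beta X' Y') (tensm f g) = cmp (tensm g f) (beta X Y);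
  pentagon : forall W X Y Z,
      cmp (alpha W X (tens Y Z)) (alpha (tens W X) Y Z)
      = cmp (tensm (idm W) (alpha X Y Z))
             (cmp (alpha W (tens X Y) Z) (tensm (alpha W X Y) (idm Z)));
  triangle : forall X Y,
      cmp (tensm (idm X) (lam Y)) (alpha X unitob Y) = tensm (rho X) (idm Y);
  symmetry : forall X Y, cmp (beta Y X) (beta X Y) = idm (tens X Y);
  hexagon : forall X Y Z,
      cmp (alpha Y Z X) (cmp (beta X (tens Y Z)) (alpha X Y Z))
      = cmp (tensm (idm Y) (beta X Z))
             (cmp (alpha Y X Z) (tensm (beta X Y) (idm Z)))
}.

Arguments tens {_ _} _ _ _.
Arguments tensm {_ _} _ {_ _ _ _} _ _.
Arguments unitob {_ _} _.
Arguments alpha {_ _} _ _ _ _.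
Arguments alphai {_ _} _ _ _ _.
Arguments lam {_ _} _ _.
Arguments lami {_ _} _ _.
Arguments rho {_ _} _ _.
Arguments rhoi {_ _} _ _.
Arguments beta {_ _} _ _ _.

Section MonDefs.
Variables (k : fieldType) (C : kcat k) (M : smc C).

Local Notation "X ⊗ Y" := (tens M X Y) (at level 40, left associativity).
Local Notation "f ⊗m g" := (tensm M f g) (at level 40, left associativity).
Local Notation "'𝟙'" := (unitob M).

Definition is_dual (X D : Obj C) (ev : Mor (D ⊗ X) 𝟙) (coev : Mor 𝟙 (X ⊗ D)) : Prop :=
  cmp (rho M X) (cmp (idm X ⊗m ev) (cmp (alpha M X D X)
         (cmp (coev ⊗m idm X) (lami M X)))) = idm X /\
  cmp (lam M D) (cmp (ev ⊗m idm D) (cmp (alphai M D X D)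
         (cmp (idm D ⊗m coev) (rhoi M D)))) = idm D.

(* every object is rigid (in a symmetric category left duals suffice) *)
Definition rigid : Prop :=
  forall X : Obj C, exists D (ev : Mor (D ⊗ X) 𝟙) (coev : Mor 𝟙 (X ⊗ D)),
    is_dual ev coev.

Definition end_unit_is_k : Prop :=
  idm 𝟙 <> 0 /\ forall f : Mor 𝟙 𝟙, exists c : k, f = c *: idm 𝟙.

Definition comm_algebra (A : Obj C) (mu : Mor (A ⊗ A) A) (eta : Mor 𝟙 A) : Prop :=
  [/\ cmp mu (mu ⊗m idm A) = cmp mu (cmp (idm A ⊗m mu) (alpha M A A A)),
      cmp mu (eta ⊗m idm A) = lam M A,
      cmp mu (idm A ⊗m eta) = rho M A
    & cmp mu (beta M A A) = mu].

(* an ideal of A: an A-submodule of A, i.e. a subobject i : I -> A such that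
   the multiplication A ⊗ I -> A factors through I *)
Definition is_ideal (A : Obj C) (mu : Mor (A ⊗ A) A) (I : Obj C) (i : Mor I A) : Prop :=
  mono i /\ exists act : Mor (A ⊗ I) I, cmp i act = cmp mu (idm A ⊗m i).

Definition simple_algebra (A : Obj C) (mu : Mor (A ⊗ A) A) : Prop :=
  ~ is_zero_obj A /\
  forall (I : Obj C) (i : Mor I A), is_ideal mu i -> is_zero_obj I \/ is_iso i.

Definition gamma_mul (A : Obj C) (mu : Mor (A ⊗ A) A) (a b : Mor 𝟙 A) : Mor 𝟙 A :=
  cmp mu (cmp (a ⊗m b) (lami M 𝟙)).

(* Gamma(A) (a commutative k-algebra, finite-dimensional since Mor(1,A) is a
   vectType k, with unitob eta) is a field *)
Definition gamma_is_field (A : Obj C) (mu : Mor (A ⊗ A) A) (eta : Mor 𝟙 A) : Prop :=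
  eta <> 0 /\ forall a : Mor 𝟙 A, a <> 0 -> exists b : Mor 𝟙 A, gamma_mul mu a b = eta.

End MonDefs.

Record preTannakian (k : fieldType) := PreTannakian {
  ptC : kcat k;
  ptM : smc ptC;
  pt_abelian : abelian ptC;
  pt_finite_length : finite_length ptC;
  pt_rigid : rigid ptM;
  pt_end_unit : end_unit_is_k ptM
}.

(* Main.v *)
From HB Require Import structures.
From mathcomp Require Import all_boot all_algebra.
Require Import Defs.
Import GRing.Theory.
Local Open Scope ring_scope.

Section Cat.
Variables (k : fieldType) (C : kcat k).

Lemma cmp0r X Y Z (g : @Mor _ C Y Z) : cmp g (0 : @Mor _ C X Y) = 0.
Proof.
have := comp_linr 1 g (0 : @Mor _ C X Y) 0; rewrite !scale1r !addr0 => h.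
by apply: (addrI (cmp g (0 : @Mor _ C X Y))); rewrite addr0 -h.
Qed.
Lemma cmp0l X Y Z (f : @Mor _ C X Y) : cmp (0 : @Mor _ C Y Z) f = 0.
Proof.
have := comp_linl 1 (0 : @Mor _ C Y Z) 0 f; rewrite !scale1r !addr0 => h.
by apply: (addrI (cmp (0 : @Mor _ C Y Z) f)); rewrite addr0 -h.
Qed.
Lemma cmpZr X Y Z (c : k) (g : @Mor _ C Y Z) (f : @Mor _ C X Y) : cmp g (c *: f) = c *: cmp g f.
Proof. by have := comp_linr c g f (0 : @Mor _ C X Y); rewrite !addr0 cmp0r addr0. Qed.
Lemma cmpDr X Y Z (g : @Mor _ C Y Z) (f f' : @Mor _ C X Y) : cmp g (f + f') = cmp g f + cmp g f'.
Proof. by have := comp_linr 1 g f f'; rewrite !scale1r. Qed.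
Lemma cmpNr X Y Z (g : @Mor _ C Y Z) (f : @Mor _ C X Y) : cmp g (- f) = - cmp g f.
Proof. by rewrite -scaleN1r cmpZr scaleN1r. Qed.
Lemma cmpBr X Y Z (g : @Mor _ C Y Z) (f f' : @Mor _ C X Y) : cmp g (f - f') = cmp g f - cmp g f'.
Proof. by rewrite cmpDr cmpNr. Qed.

Definition postc X Y Z (g : @Mor _ C Y Z) : Mor X Y -> Mor X Z := fun f => cmp g f.
Fact postc_lin X Y Z (g : @Mor _ C Y Z) : linear (@postc X Y Z g).
Proof. by move=> c f f'; rewrite /postc comp_linr. Qed.
HB.instance Definition _ (X Y Z : Obj C) (g : @Mor _ C Y Z) := GRing.isLinear.Build k (@Mor _ C X Y) (@Mor _ C X Z) _ (@postc X Y Z g) (@postc_lin X Y Z g).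

End Cat.

Lemma inj_surj (k : fieldType) (V : vectType k) (f : {linear V -> V}) :
  injective f -> forall w, exists v, f v = w.
Proof.
move=> injf w.
have injF : injective (linfun f) by move=> x y; rewrite !lfunE; apply: injf.
have /lker0P k0 := injF.
have hd2 : \dim (linfun f @: fullv) = \dim (fullv : {vspace V}).
  by apply: limg_dim_eq; rewrite (eqP k0) capv0.
have : ((linfun f) @: fullv)%VS == fullv by rewrite eqEdim subvf hd2 leqnn.
move/eqP=> E.
have : w \in ((linfun f) @: fullv)%VS by rewrite E memvf.
case/memv_imgP=> v _ ->; exists v; by rewrite lfunE.
Qed.

Section Mon.
Variables (k : fieldType) (C : kcat k) (M : smc C).
Local Notation "f ⊗m g" := (tensm M f g) (at level 40, left associativity).
Local Notation "'𝟙'" := (unitob M).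
Local Notation Hom X Y := (@Mor _ C X Y).

Lemma lami_nat X X' (f : Hom X X') :
  cmp (lami M X') f = cmp (idm 𝟙 ⊗m f) (lami M X).
Proof.
rewrite -[f in LHS]compm1 -(lamKV M X) [cmp f _]compA -lam_nat !compA lamK comp1m //.
Qed.

Lemma alphai_nat X X' Y Y' Z Z' (f : Hom X X') (g : Hom Y Y') (h : Hom Z Z') :
  cmp (alphai M X' Y' Z') (f ⊗m (g ⊗m h)) = cmp ((f ⊗m g) ⊗m h) (alphai M X Y Z).
Proof.
rewrite -[f ⊗m (g ⊗m h)]compm1 -(alphaKV M X Y Z) [cmp (f ⊗m _) _]compA -alpha_nat !compA alphaK comp1m //.
Qed.

Lemma tensm0l X X' Y Y' (g : Hom Y Y') : (0 : Hom X X') ⊗m g = 0.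
Proof.
have := tensm_linl M 1 (0 : Hom X X') 0 g; rewrite !scale1r !addr0 => h.
by apply: (addrI ((0 : Hom X X') ⊗m g)); rewrite addr0 -h.
Qed.

Lemma tens_split X X' Y Y' (f : Hom X X') (g : Hom Y Y') :
  f ⊗m g = cmp (idm X' ⊗m g) (f ⊗m idm Y).
Proof. by rewrite -tensm_comp comp1m compm1. Qed.

Lemma tens_split' X X' Y Y' (f : Hom X X') (g : Hom Y Y') :
  f ⊗m g = cmp (f ⊗m idm Y') (idm X ⊗m g).
Proof. by rewrite -tensm_comp comp1m compm1. Qed.

Hypothesis habel : abelian C.
Hypothesis hend : end_unit_is_k M.
Variables (A : Obj C) (mu : Hom (tens M A A) A) (eta : Hom 𝟙 A).
Hypothesis hcomm : comm_algebra mu eta.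
Hypothesis hsimp : simple_algebra mu.

Lemma eta_neq0 : eta <> 0.
Proof.
move=> e0; case: hsimp => nz _; apply: nz.
case: hcomm => _ hl _ _.
rewrite /is_zero_obj -(lamKV M A) -hl e0 tensm0l cmp0r cmp0l //.
Qed.

Variable a : Hom 𝟙 A.
Definition ma := cmp mu (cmp (a ⊗m idm A) (lami M A)).

Lemma ma_comp X (f : Hom X A) : cmp ma f = cmp mu (cmp (a ⊗m f) (lami M X)).
Proof.
by rewrite /ma -!compA lami_nat [cmp (_ ⊗m _) (cmp _ _)]compA -tensm_comp compm1 comp1m.
Qed.

Lemma ma_eta : exists2 c : k, c != 0 & cmp ma eta = c *: a.
Proof.
case: hend => id0 hk.
have [c hc] := hk (cmp (rho M 𝟙) (lami M 𝟙)).
exists c.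
  apply/eqP=> c0; apply: id0.
  rewrite -(lamKV M 𝟙) -[lami M 𝟙]comp1m -(rhoK M 𝟙) -[cmp (cmp _ _) (lami M 𝟙)]compA hc c0 scale0r.
  by rewrite cmp0r cmp0r.
rewrite ma_comp tens_split -compA [cmp mu _]compA.
case: hcomm => _ _ hr _; rewrite hr compA rho_nat -compA hc cmpZr compm1 //.
Qed.

Lemma ma_ideal K (i : Hom K A) : cmp ma i = 0 -> cmp ma (cmp mu (idm A ⊗m i)) = 0.
Proof.
move=> hi.
have h0 : cmp mu (a ⊗m i) = 0.
  rewrite -[a ⊗m i]compm1 -(lamK M K) [cmp (a ⊗m i) _]compA compA -ma_comp hi cmp0l //.
case: hcomm => hassoc _ _ hb.
rewrite -hb -compA beta_nat [cmp mu (cmp _ _)]compA compA.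
suff -> : cmp ma (cmp mu (i ⊗m idm A)) = 0 by rewrite cmp0l.
rewrite ma_comp.
have -> : a ⊗m cmp mu (i ⊗m idm A) = cmp (idm A ⊗m mu) (a ⊗m (i ⊗m idm A)).
  by rewrite -tensm_comp comp1m.
have hm : cmp mu (idm A ⊗m mu) = cmp (cmp mu (mu ⊗m idm A)) (alphai M A A A).
  by rewrite hassoc -!compA alphaKV compm1.
rewrite compA compA hm -!compA [cmp (alphai _ _ _ _) _]compA alphai_nat -!compA.
rewrite [cmp (mu ⊗m _) _]compA -tensm_comp h0 tensm0l cmp0l cmp0r //.
Qed.

End Mon.

Lemma main_gen (k : fieldType) (C : kcat k) (M : smc C) :
  abelian C -> end_unit_is_k M ->
  forall (A : Obj C) (mu : Mor (tens M A A) A) (eta : Mor (unitob M) A),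
  comm_algebra mu eta -> simple_algebra mu -> gamma_is_field mu eta.
Proof.
move=> habel hend A mu eta hcomm hsimp.
split; first exact: (@eta_neq0 _ _ _ _ _ _ hcomm hsimp).
move=> a a0.
set m := @ma _ _ M A mu a.
have [c c0 hc] := @ma_eta _ _ M hend A mu eta hcomm a.
case: habel => _ _ hker _ _.
have [[K [i [hi0 hiu]]] _] := hker _ _ m.
have monoi : mono i.
  move=> W g h e.
  have e0 : cmp m (cmp i g) = 0 by rewrite compA hi0 cmp0l.
  have [t [_ tu]] := hiu W (cmp i g) e0.
  by rewrite -(tu g erefl) (tu h (esym e)).
have hid : is_ideal mu i.
  split=> //.
  have [act [hact _]] := hiu _ (cmp mu (tensm M (idm A) i)) (@ma_ideal _ _ M A mu eta hcomm a K i hi0).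
  by exists act.
case: hsimp => _ /(_ K i hid) [hz | [j [_ hij]]].
- have injm : injective (@postc _ _ (unitob M) A A m).
    move=> g h; rewrite /postc => e.
    have e' : cmp m (g - h) = 0 by rewrite cmpBr e subrr.
    have [t [ht _]] := hiu _ _ e'.
    have t0 : t = 0 by rewrite -[t]comp1m hz cmp0l.
    by apply/eqP; rewrite -subr_eq0 -ht t0 cmp0r.
  have [b hb] := @inj_surj k _ (@postc _ _ (unitob M) A A m : {linear _ -> _}) injm eta.
  exists b; rewrite /gamma_mul -(@ma_comp _ _ M A mu a); exact: hb.
- exfalso; apply: a0.
  have m0 : m = 0 by rewrite -[m]compm1 -hij compA hi0 cmp0l.
  move: hc; rewrite -/m m0 cmp0l => /esym/eqP; rewrite scaler_eq0 (negbTE c0) /=.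
  by move/eqP.
Qed.

Theorem proposition2p1 (k : fieldType) (T : preTannakian k) (A : Obj (ptC T))
  (mu : Mor (tens (ptM T) A A) A) (eta : Mor (unitob (ptM T)) A) :
  comm_algebra mu eta -> simple_algebra mu ->
  gamma_is_field mu eta.
Proof.
exact: (@main_gen k (ptC T) (ptM T) (pt_abelian T) (pt_end_unit T) A mu eta).
Qed.
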